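(* Let $[\mathcal{S},\mathcal{T},\mathcal{R}]$ be a backdoor triple such that $\mathcal{S}$, $\mathcal{T}$ and $\mathcal{R}$ are finite. Let $I_s=(V,C)$ be an instance of $\mathrm{CSP}(\mathcal{S})$ and $I_t=(V,C')$ an instance of $\mathrm{CSP}(\mathcal{T})$ on the same variable set. Then $\mathrm{Sol}(I_s)=\mathrm{Sol}(I_t)$ if and only if $I_s$ and $I_t$ have the same set of complete $\mathcal{R}$-certificates.
   Context: A partition scheme is a set $\mathcal{R}$ of binary relations over a domain $D$ that are pairwise disjoint, whose union is $D^2$, which contains equality on $D$, and which is closed under taking converses. A relation is qffo-definable in $\mathcal{R}$ if it is the solution set of a quantifier-free first-order formula (with equality, no parameters) over $\mathcal{R}$; a qffo reduct of $\mathcal{R}$ is a set of relations over $D$ each qffo-definable in $\mathcal{R}$. A backdoor triple $[\mathcal{S},\mathcal{T},\mathcal{R}]$ consists of a partition scheme $\mathcal{R}$ and two qffo reducts $\mathcal{S},\mathcal{T}$ of $\mathcal{R}$. $\mathrm{CSP}(\Gamma)$ instances are pairs $(V,C)$ of variables and constraints $R(x_1,\dots,x_k)$ with $R\in\Gamma$; $\mathrm{Sol}(I)$ is the set of satisfying assignments $V\to D$. Each qffo-definable relation is given by a DNF definition using only unnegated atoms $S(x,y)$, $S\in\mathcal{R}$. An $\mathcal{R}$-certificate for $I=(V,C)$ is a satisfiable $\mathrm{CSP}(\mathcal{R})$ instance $(V,C'')$ such that for each constraint of $C$ some clause of its DNF definition has all its literals in $C''$. It is complete if it contains a constraint on every ordered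 pair of (not necessarily distinct) variables of $V$. *)

(* Defs.v *)
From mathcomp Require Import all_boot.
Set Implicit Arguments. Unset Strict Implicit. Unset Printing Implicit Defensive.

Definition partition_scheme (D : Type) (RI : finType) (rel : RI -> D -> D -> Prop) : Prop :=
  [/\
      (forall (i j : RI) (x y : D), i <> j -> rel i x y -> rel j x y -> False),
      (forall x y : D, exists i, rel i x y),
      (exists i, forall x y : D, rel i x y <-> x = y)
    &
      (forall i, exists j, forall x y : D, rel j x y <-> rel i y x)].

(* A clause of a DNF definition of a k-ary relation: a list of unnegated atoms
   r(x_a, x_b), with r in R and a, b < k. *)
Definition atom (RI : finType) (k : nat) : Type := (RI * 'I_k * 'I_k)%type.

Definition clause_holds (D : Type) (RI : finType) (rel : RI -> D -> D -> Prop)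
    (k : nat) (cl : seq (atom RI k)) (t : k.-tuple D) : Prop :=
  forall a, a \in cl -> rel a.1.1 (tnth t a.1.2) (tnth t a.2).

(* A finite qffo reduct of R: a finite family of relations (of arbitrary
   arities), each given together with a DNF definition over R that defines it. *)
Record qffo_reduct (D : Type) (RI : finType) (rel : RI -> D -> D -> Prop) := {
  ridx : finType;
  rar : ridx -> nat;
  rrel : forall s : ridx, (rar s).-tuple D -> Prop;
  rdnf : forall s : ridx, seq (seq (atom RI (rar s)));
  rdnf_ok : forall (s : ridx) (t : (rar s).-tuple D),
      rrel t <-> exists2 cl, cl \in rdnf s & clause_holds rel cl t
}.

(* A CSP(S) instance on variable set V: its set of constraints
   s(x_1,...,x_k), given as a predicate on (relation, variable tuple). *)
Definition instance (D : Type) (RI : finType) (rel : RI -> D -> D -> Prop)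
    (S : qffo_reduct rel) (V : Type) : Type :=
  forall s : ridx S, (rar s).-tuple V -> Prop.

Definition Sol (D : Type) (RI : finType) (rel : RI -> D -> D -> Prop)
    (S : qffo_reduct rel) (V : Type) (C : instance S V) : (V -> D) -> Prop :=
  fun f => forall s t, C s t -> rrel (map_tuple f t).

Definition Rinstance (RI : finType) (V : Type) : Type := RI -> V -> V -> Prop.

Definition Rsatisfiable (D : Type) (RI : finType) (rel : RI -> D -> D -> Prop)
    (V : Type) (C2 : Rinstance RI V) : Prop :=
  exists f : V -> D, forall r x y, C2 r x y -> rel r (f x) (f y).

Definition certificate (D : Type) (RI : finType) (rel : RI -> D -> D -> Prop)
    (S : qffo_reduct rel) (V : Type) (C : instance S V) (C2 : Rinstance RI V) : Prop :=
  Rsatisfiable rel C2 /\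
  forall (s : ridx S) (t : (rar s).-tuple V), C s t ->
    exists2 cl, cl \in rdnf s &
      forall a, a \in cl -> C2 a.1.1 (tnth t a.1.2) (tnth t a.2).

Definition complete (RI : finType) (V : Type) (C2 : Rinstance RI V) : Prop :=
  forall x y : V, exists r, C2 r x y.

Definition complete_certificate (D : Type) (RI : finType) (rel : RI -> D -> D -> Prop)
    (S : qffo_reduct rel) (V : Type) (C : instance S V) (C2 : Rinstance RI V) : Prop :=
  certificate C C2 /\ complete C2.

(* Main.v *)
Require Import Defs.
From mathcomp Require Import all_boot.

Lemma sol_of_clauses (D : Type) (RI : finType) (rel : RI -> D -> D -> Prop)
    (S : qffo_reduct rel) (V : finType) (C : instance S V) (C2 : Rinstance RI V)
    (f : V -> D) :
  (forall r x y, C2 r x y -> rel r (f x) (f y)) ->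
  (forall (s : ridx S) (t : (rar s).-tuple V), C s t ->
    exists2 cl, cl \in rdnf s &
      forall a, a \in cl -> C2 a.1.1 (tnth t a.1.2) (tnth t a.2)) ->
  Sol C f.
Proof.
move=> Hf Hc s t Cst. apply/rdnf_ok.
have [cl Hcl Ha] := Hc s t Cst; exists cl => // a Ha'.
rewrite !tnth_map; exact: Hf (Ha a Ha').
Qed.

Lemma clauses_of_sol (D : Type) (RI : finType) (rel : RI -> D -> D -> Prop)
    (HR : partition_scheme rel)
    (S : qffo_reduct rel) (V : finType) (C : instance S V) (C2 : Rinstance RI V)
    (f : V -> D) :
  (forall r x y, C2 r x y -> rel r (f x) (f y)) -> complete C2 ->
  Sol C f ->
  (forall (s : ridx S) (t : (rar s).-tuple V), C s t ->
    exists2 cl, cl \in rdnf s &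
      forall a, a \in cl -> C2 a.1.1 (tnth t a.1.2) (tnth t a.2)).
Proof.
case: HR => Hdis _ _ _ Hf Hcomp Hsol s t Cst.
have [cl Hcl Ha] := proj1 (rdnf_ok _) (Hsol s t Cst).
exists cl => // a Ha'.
have := Ha a Ha'; rewrite !tnth_map => Hr.
have [r Hr2] := Hcomp (tnth t a.1.2) (tnth t a.2).
case: (eqVneq r a.1.1) => [<- //|Hne].
exfalso; apply: (Hdis r a.1.1 _ _ (elimN eqP Hne) (Hf _ _ _ Hr2) Hr).
Qed.

Theorem mainTheorem2 (D : Type) (RI : finType) (rel : RI -> D -> D -> Prop)
    (HR : partition_scheme rel) (S T : qffo_reduct rel) (V : finType)
    (Cs : instance S V) (Ct : instance T V) :
  (forall f : V -> D, Sol Cs f <-> Sol Ct f) <->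
  (forall C2 : Rinstance RI V, complete_certificate Cs C2 <-> complete_certificate Ct C2).
Proof.
have key : forall (S T : qffo_reduct rel) (Cs : instance S V) (Ct : instance T V),
  (forall f : V -> D, Sol Cs f -> Sol Ct f) ->
  forall C2, complete_certificate Cs C2 -> complete_certificate Ct C2.
  move=> S' T' Cs' Ct' Himp C2 [[[f Hf] Hc] Hcomp].
  split=> //; split; first by exists f.
  apply: (@clauses_of_sol _ _ _ HR T' V Ct' C2 f Hf Hcomp).
  by apply: Himp; apply: (@sol_of_clauses _ _ _ S' V Cs' C2 f Hf Hc).
split.
  move=> H C2; split; apply: key => f; by case: (H f).
move=> H f.
pose C2 : Rinstance RI V := fun r x y => rel r (f x) (f y).
have Hf : forall r x y, C2 r x y -> rel r (f x) (f y) by [].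
have Hcomp : complete C2 by case: HR => _ Hu _ _ x y; apply: Hu.
split=> Hs.
- have [[_ Hc] _] := (H C2).1 (conj (conj (ex_intro _ f Hf) (@clauses_of_sol _ _ _ HR _ _ _ _ _ Hf Hcomp Hs)) Hcomp).
  exact: (@sol_of_clauses _ _ _ _ _ _ _ _ Hf Hc).
- have [[_ Hc] _] := (H C2).2 (conj (conj (ex_intro _ f Hf) (@clauses_of_sol _ _ _ HR _ _ _ _ _ Hf Hcomp Hs)) Hcomp).
  exact: (@sol_of_clauses _ _ _ _ _ _ _ _ Hf Hc).
Qed.
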